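(* If $U$ is a Clifford+$V$ operator, then $U=ABC$ where $A$ is a product of $V$-gates, $B$ is a Pauli+$S$ operator, and $C$ is one of $I$, $H$, $HS$, $\omega I$, $H\omega$, $HS\omega$.
   Context: Let $\omega=e^{i\pi/4}$, $H=\frac{1}{\sqrt2}\begin{bmatrix}1&1\\1&-1\end{bmatrix}$, $S=\begin{bmatrix}1&0\\0&i\end{bmatrix}$, $X=\begin{bmatrix}0&1\\1&0\end{bmatrix}$, $Y=\begin{bmatrix}0&-i\\i&0\end{bmatrix}$, $Z=\begin{bmatrix}1&0\\0&-1\end{bmatrix}$. The $V$-gates are $V_X=\frac{1}{\sqrt5}\begin{bmatrix}1&2i\\2i&1\end{bmatrix}$, $V_Y=\frac{1}{\sqrt5}\begin{bmatrix}1&2\\-2&1\end{bmatrix}$, $V_Z=\frac{1}{\sqrt5}\begin{bmatrix}1+2i&0\\0&1-2i\end{bmatrix}$ and their inverses. A Clifford+$V$ operator is an element of the group generated by $\omega I$, $H$, $S$, $V_X,V_Y,V_Z$. A Pauli+$S$ operator is an element of the group generated by $X,Y,Z,S$. *)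

(* Defs.v *)
From HB Require Import structures.
From mathcomp Require Import all_boot all_order all_algebra all_field.
Set Implicit Arguments. Unset Strict Implicit. Unset Printing Implicit Defensive.
Import Order.TTheory GRing.Theory Num.Theory.
Local Open Scope ring_scope.

Definition mx2 (a b c d : algC) : 'M[algC]_2 :=
  \matrix_(i < 2, j < 2)
    if i == 0 :> nat then (if j == 0 :> nat then a else b)
    else (if j == 0 :> nat then c else d).

(* omega = e^{i pi/4} = (1 + i)/sqrt 2 *)
Definition omega : algC := (1 + 'i) / sqrtC 2.
Definition omegaI : 'M[algC]_2 := omega%:M.

Definition Hg : 'M[algC]_2 := (sqrtC 2)^-1 *: mx2 1 1 1 (-1).
Definition Sg : 'M[algC]_2 := mx2 1 0 0 'i.
Definition Xg : 'M[algC]_2 := mx2 0 1 1 0.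
Definition Yg : 'M[algC]_2 := mx2 0 (-'i) 'i 0.
Definition Zg : 'M[algC]_2 := mx2 1 0 0 (-1).

Definition VX : 'M[algC]_2 := (sqrtC 5)^-1 *: mx2 1 (2 * 'i) (2 * 'i) 1.
Definition VY : 'M[algC]_2 := (sqrtC 5)^-1 *: mx2 1 2 (-2) 1.
Definition VZ : 'M[algC]_2 := (sqrtC 5)^-1 *: mx2 (1 + 2 * 'i) 0 0 (1 - 2 * 'i).

Inductive generated (gens : 'M[algC]_2 -> Prop) : 'M[algC]_2 -> Prop :=
  | gen_one : generated gens 1
  | gen_mul g M : gens g -> generated gens M -> generated gens (g *m M)
  | gen_inv g M : gens g -> generated gens M -> generated gens (invmx g *m M).

Definition V_gens (g : 'M[algC]_2) : Prop := g = VX \/ g = VY \/ g = VZ.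

Definition clifford_V (U : 'M[algC]_2) : Prop :=
  generated (fun g => g = omegaI \/ g = Hg \/ g = Sg \/ V_gens g) U.

Definition V_product (A : 'M[algC]_2) : Prop := generated V_gens A.

Definition pauli_S (B : 'M[algC]_2) : Prop :=
  generated (fun g => g = Xg \/ g = Yg \/ g = Zg \/ g = Sg) B.

(* Main.v *)
Require Import Defs.
From HB Require Import structures.
From mathcomp Require Import all_boot all_order all_algebra all_field.
From mathcomp Require Import ring.
Import Order.TTheory GRing.Theory Num.Theory.
Local Open Scope ring_scope.

Lemma mx2_mul a b c d e f g h :
  mx2 a b c d *m mx2 e f g h = mx2 (a*e+b*g) (a*f+b*h) (c*e+d*g) (c*f+d*h).
Proof.
apply/matrixP => i j; rewrite !mxE !big_ord_recl big_ord0 !mxE addr0.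
by case: i => [[|[|?]] ?] //; case: j => [[|[|?]] ?].
Qed.
Lemma mx2_scale k a b c d : k *: mx2 a b c d = mx2 (k*a) (k*b) (k*c) (k*d).
Proof.
apply/matrixP => i j; rewrite !mxE.
by case: i => [[|[|?]] ?] //; case: j => [[|[|?]] ?].
Qed.
Lemma mx2_scalar a : a%:M = mx2 a 0 0 a :> 'M[algC]_2.
Proof.
apply/matrixP => i j; rewrite !mxE.
by case: i => [[|[|?]] ?] //; case: j => [[|[|?]] ?].
Qed.
Lemma mx2_1 : 1%:M = mx2 1 0 0 1 :> 'M[algC]_2.
Proof. exact: mx2_scalar. Qed.
Lemma mx2_one : 1 = mx2 1 0 0 1 :> 'M[algC]_2.
Proof. exact: mx2_scalar. Qed.
Lemma mx2_eq a b c d a' b' c' d' :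
  a = a' -> b = b' -> c = c' -> d = d' -> mx2 a b c d = mx2 a' b' c' d'.
Proof. by move=> -> -> -> ->. Qed.

Lemma hi : 'i ^+ 2 = -1 :> algC. Proof. exact: sqrCi. Qed.
Lemma h2 : sqrtC 2 ^+ 2 = 2 :> algC. Proof. by rewrite sqrtCK. Qed.
Lemma h5 : sqrtC 5 ^+ 2 = 5 :> algC. Proof. by rewrite sqrtCK. Qed.
Lemma h2n : sqrtC 2 != 0 :> algC. Proof. by rewrite sqrtC_eq0 pnatr_eq0. Qed.
Lemma h5n : sqrtC 5 != 0 :> algC. Proof. by rewrite sqrtC_eq0 pnatr_eq0. Qed.

Ltac mxsolve :=
  rewrite /Hg /Sg /Xg /Yg /Zg /VX /VY /VZ /omegaI /omega ?mx2_1 ?mx2_scalar ?mx2_one;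
  rewrite ?mx2_scale; rewrite ?mx2_mul ?mx2_scale; rewrite ?mx2_mul ?mx2_scale; rewrite ?mx2_mul ?mx2_scale;
  rewrite ?mx2_mul ?mx2_scale; rewrite ?mx2_mul ?mx2_scale; rewrite ?mx2_mul ?mx2_scale;
  apply: mx2_eq; field: hi h2 h5; rewrite ?mulf_neq0 ?h2n ?h5n //.


Definition ph (a : nat) : 'M[algC]_2 := ('i ^+ a)%:M.
Definition Xb (b : bool) : 'M[algC]_2 := if b then Xg else 1.
Fixpoint Sp (c : nat) : 'M[algC]_2 := if c is c'.+1 then Sg *m Sp c' else 1.
Fact NF_key : unit. Proof. exact: tt. Qed.
Definition NF a b c := locked_with NF_key (ph a *m Xb b *m Sp c).
Lemma NFE a b c : NF a b c = ph a *m Xb b *m Sp c.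
Proof. by rewrite /NF unlock. Qed.
Inductive ck := k1 | kH | kHS.
Definition C0 k : 'M[algC]_2 := match k with k1 => 1 | kH => Hg | kHS => Hg *m Sg end.
Definition Wm (e : bool) : 'M[algC]_2 := if e then omegaI else 1.

Lemma ph_comm a M : ph a *m M = M *m ph a.
Proof. by rewrite scalar_mxC. Qed.
Lemma ph_add a b : ph a *m ph b = ph (a + b).
Proof. by rewrite /ph -scalar_mxM exprD. Qed.
Lemma ph0 : ph 0 = 1.
Proof. by rewrite /ph expr0. Qed.
Lemma Wm_comm e M : Wm e *m M = M *m Wm e.
Proof. case: e => /=; [by rewrite /omegaI scalar_mxC | by rewrite mul1mx mulmx1]. Qed.
Lemma Sp_add m n : Sp m *m Sp n = Sp (m + n).
Proof. elim: m => [|m IH] /=; first by rewrite mul1mx. by rewrite -mulmxA IH. Qed.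
Lemma SX : Sg *m Xg = ph 1 *m Xg *m Sp 3.
Proof. rewrite /ph /=; mxsolve. Qed.
Lemma XX : Xg *m Xg = 1.
Proof. mxsolve. Qed.
Lemma Sp4 : Sp 4 = 1.
Proof. rewrite /=; mxsolve. Qed.
Lemma HX : Hg *m Xg = Sp 2 *m Hg.
Proof. rewrite /=; mxsolve. Qed.
Lemma om2 : omegaI *m omegaI = ph 1.
Proof. rewrite /ph; mxsolve. Qed.

Lemma SpX c : Sp c *m Xg = ph c *m Xg *m Sp (3 * c).
Proof.
elim: c => [|c IH]; first by rewrite /= ph0 mul1mx mulmx1 ?muln0.
rewrite mulnS -Sp_add -[Sp c.+1]/(Sg *m Sp c).
rewrite -mulmxA IH !mulmxA -ph_comm -!mulmxA (mulmxA Sg) SX.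
by rewrite !mulmxA ph_add addn1.
Qed.

Lemma P_mul b c b' c' :
  (Xb b *m Sp c) *m (Xb b' *m Sp c') =
  ph (if b' then c else 0) *m (Xb (b (+) b') *m Sp ((if b' then 3 * c else c) + c')).
Proof.
case: b' => /=.
- rewrite -!mulmxA (mulmxA (Sp c)) SpX -!mulmxA.
  rewrite (mulmxA (Xb b)) -ph_comm -!mulmxA Sp_add; congr (_ *m _).
  rewrite !mulmxA; congr (_ *m _).
  by case: b => /=; rewrite ?XX ?mul1mx ?mulmx1.
- rewrite ph0 mul1mx mul1mx -mulmxA Sp_add.
  by case: b.
Qed.

Lemma NF_mul a b c a' b' c' :
  NF a b c *m NF a' b' c' =
  NF (a + a' + (if b' then c else 0)) (b (+) b') ((if b' then 3 * c else c) + c').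
Proof.
have E (M N : 'M[algC]_2) x : M *m (ph x *m N) = ph x *m (M *m N).
  by rewrite mulmxA -ph_comm -mulmxA.
rewrite !NFE -!mulmxA (E (Sp c)) (E (Xb b)) mulmxA ph_add (mulmxA (Xb b)) P_mul mulmxA ph_add.
by rewrite -?mulmxA.
Qed.

Lemma NF_ph a b c x : NF a b c *m ph x = NF (a + x) b c.
Proof. by rewrite !NFE -ph_comm !mulmxA ph_add addnC. Qed.

Lemma Sp_mod c : Sp c = Sp (c %% 4)%N.
Proof.
rewrite {1}(divn_eq c 4) -Sp_add.
suff -> : Sp (c %/ 4 * 4)%N = 1 by rewrite mul1mx.
elim: (c %/ 4)%N => [|q IH] //.
by rewrite mulSn -Sp_add Sp4 mul1mx.
Qed.

Lemma WW e e' : Wm e *m Wm e' = ph (e && e') *m Wm (e (+) e').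
Proof.
case: e; case: e' => /=; rewrite ?ph0 ?mul1mx ?mulmx1 //.
by rewrite om2 ?mulmx1.
Qed.

Lemma Htable (r : nat) (k : ck) : (r < 4)%N -> exists (e : bool) (a : nat) (b : bool) (c : nat) (k' : ck),
  Hg *m Sp r *m C0 k = Wm e *m NF a b c *m C0 k'.
Proof.
case: r => [|[|[|[|r]]]] // _; case: k.
- by exists false, 0, false, 0, kH; rewrite NFE /= ph0 !mul1mx !mulmx1.
- by exists false, 0, false, 0, k1; rewrite NFE /= ph0 !mul1mx !mulmx1; mxsolve.
- by exists false, 0, false, 1, k1; rewrite NFE /= ph0 !mul1mx !mulmx1 mulmxA; mxsolve.
- by exists false, 0, false, 0, kHS; rewrite NFE /= ph0 !mul1mx !mulmx1.
- by exists true, 3, true, 1, kHS; rewrite NFE /ph /=; mxsolve.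
- by exists true, 0, false, 3, kH; rewrite NFE /ph /=; mxsolve.
- by exists false, 0, true, 0, kH; rewrite NFE /ph /=; mxsolve.
- by exists false, 0, true, 0, k1; rewrite NFE /ph /=; mxsolve.
- by exists false, 0, true, 1, k1; rewrite NFE /ph /=; mxsolve.
- by exists false, 0, true, 0, kHS; rewrite NFE /ph /=; mxsolve.
- by exists true, 3, false, 1, kHS; rewrite NFE /ph /=; mxsolve.
- by exists true, 0, true, 3, kH; rewrite NFE /ph /=; mxsolve.
Qed.

Lemma inv_of (A B : 'M[algC]_2) : A *m B = 1%:M -> invmx A = B.
Proof.
move=> AB; have [uA _] := mulmx1_unit AB.
by rewrite -[invmx A]mulmx1 -AB mulmxA mulVmx // mul1mx.
Qed.

Definition VXi : 'M[algC]_2 := (sqrtC 5)^-1 *: mx2 1 (- (2 * 'i)) (- (2 * 'i)) 1.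
Definition VYi : 'M[algC]_2 := (sqrtC 5)^-1 *: mx2 1 (-2) 2 1.
Definition VZi : 'M[algC]_2 := (sqrtC 5)^-1 *: mx2 (1 - 2 * 'i) 0 0 (1 + 2 * 'i).

Lemma iVX : invmx VX = VXi.
Proof. apply: inv_of; rewrite /VXi; mxsolve. Qed.
Lemma iVY : invmx VY = VYi.
Proof. apply: inv_of; rewrite /VYi; mxsolve. Qed.
Lemma iVZ : invmx VZ = VZi.
Proof. apply: inv_of; rewrite /VZi; mxsolve. Qed.

Definition Vstep (g : 'M[algC]_2) :=
  forall v, V_gens v ->
    (exists w, V_gens w /\ (g *m v = w *m g \/ g *m v = invmx w *m g)) /\
    (exists w, V_gens w /\ (g *m invmx v = w *m g \/ g *m invmx v = invmx w *m g)).

Lemma normV g : Vstep g -> forall A, V_product A ->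
  exists A', V_product A' /\ g *m A = A' *m g.
Proof.
move=> hg A; elim => [|v M hv _ [A' [hA' e]]|v M hv _ [A' [hA' e]]].
- by exists 1; split; [exact: gen_one | rewrite mul1mx mulmx1].
- have [[w [hw [E|E]]] _] := hg v hv.
  + exists (w *m A'); split; first exact: gen_mul.
    by rewrite mulmxA E -mulmxA e mulmxA.
  + exists (invmx w *m A'); split; first exact: gen_inv.
    by rewrite mulmxA E -mulmxA e mulmxA.
- have [_ [w [hw [E|E]]]] := hg v hv.
  + exists (w *m A'); split; first exact: gen_mul.
    by rewrite mulmxA E -mulmxA e mulmxA.
  + exists (invmx w *m A'); split; first exact: gen_inv.
    by rewrite mulmxA E -mulmxA e mulmxA.
Qed.

Lemma VstepS : Vstep Sg.
Proof.
move=> v [->|[->|->]]; split.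
- exists VY; split; first by right; left.
  left; mxsolve.
- exists VY; split; first by right; left.
  right; rewrite !iVX ?iVY /VXi /VYi; mxsolve.
- exists VX; split; first by left.
  right; rewrite iVX /VXi; mxsolve.
- exists VX; split; first by left.
  left; rewrite iVY /VYi; mxsolve.
- exists VZ; split; first by right; right.
  left; mxsolve.
- exists VZ; split; first by right; right.
  right; rewrite iVZ /VZi; mxsolve.
Qed.

Lemma VstepH : Vstep Hg.
Proof.
move=> v [->|[->|->]]; split.
- exists VZ; split; first by right; right.
  left; mxsolve.
- exists VZ; split; first by right; right.
  right; rewrite !iVX ?iVZ /VXi /VZi; mxsolve.
- exists VY; split; first by right; left.
  right; rewrite iVY /VYi; mxsolve.
- exists VY; split; first by right; left.
  left; rewrite iVY /VYi; mxsolve.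
- exists VX; split; first by left.
  left; mxsolve.
- exists VX; split; first by left.
  right; rewrite iVZ ?iVX /VZi /VXi; mxsolve.
Qed.

Definition Q (M : 'M[algC]_2) := exists A a b c k e,
  V_product A /\ M = A *m NF a b c *m (C0 k *m Wm e).

Lemma phE (M N : 'M[algC]_2) x : M *m (ph x *m N) = ph x *m (M *m N).
Proof. by rewrite mulmxA -ph_comm -mulmxA. Qed.

Lemma eS : Sg = NF 0 false 1.
Proof. by rewrite NFE ph0 /= !mul1mx !mulmx1. Qed.

Lemma Q_S M : Q M -> Q (Sg *m M).
Proof.
move=> [A [a [b [c [k [e [hA ->]]]]]]].
have [A' [hA' E]] := @normV Sg VstepS A hA.
exists A', (0 + a + (if b then 1 else 0))%N, (false (+) b),
  ((if b then 3 * 1 else 1) + c)%N, k, e; split => //.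
by rewrite -NF_mul -eS !mulmxA E.
Qed.

Lemma Q_omega M : Q M -> Q (omegaI *m M).
Proof.
move=> [A [a [b [c [k [e [hA ->]]]]]]].
exists A, (a + (e && true))%N, b, c, k, (e (+) true); split => //.
have h N : omegaI *m N = N *m omegaI by rewrite /omegaI scalar_mxC.
rewrite -NF_ph h -!mulmxA (WW e true) (phE (C0 k)).
by rewrite !mulmxA.
Qed.

Lemma HNF a b c : Hg *m NF a b c = NF a false (2 * b) *m Hg *m Sp c.
Proof.
rewrite !NFE !mulmxA -ph_comm /=; case: b => /=.
- by rewrite -(mulmxA (ph a)) HX mulmx1 !mulmxA.
- by rewrite !mulmx1.
Qed.

Lemma Q_H M : Q M -> Q (Hg *m M).
Proof.
move=> [A [a [b [c [k [e [hA ->]]]]]]].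
have [A' [hA' E]] := @normV Hg VstepH A hA.
have [e' [a1 [b1 [c1 [k' T]]]]] := @Htable (c %% 4)%N k (ltn_pmod c (isT : (0 < 4)%N)).
exists A', (a + a1 + (if b1 then 2 * b else 0) + (e' && e))%N, (false (+) b1),
  ((if b1 then 3 * (2 * b) else 2 * b) + c1)%N, k', (e' (+) e); split => //.
have T2 X : X *m Hg *m Sp (c %% 4)%N *m C0 k = X *m (Wm e' *m NF a1 b1 c1 *m C0 k').
  by rewrite -T !mulmxA.
rewrite -NF_ph -NF_mul !mulmxA E -(mulmxA A' Hg) HNF Sp_mod !mulmxA T2.
rewrite -(mulmxA (Wm e')) (Wm_comm e' (NF a1 b1 c1 *m C0 k')) -mulmxA.
rewrite -(mulmxA (NF a1 b1 c1 *m C0 k')) WW.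
by rewrite -(mulmxA (NF a1 b1 c1)) (phE (C0 k')) !mulmxA.
Qed.

Lemma Q_V v M : V_gens v -> Q M -> Q (v *m M) /\ Q (invmx v *m M).
Proof.
move=> hv [A [a [b [c [k [e [hA ->]]]]]]]; split.
- exists (v *m A), a, b, c, k, e; split; first exact: gen_mul.
  by rewrite !mulmxA.
- exists (invmx v *m A), a, b, c, k, e; split; first exact: gen_inv.
  by rewrite !mulmxA.
Qed.

Lemma Q_iter g n M : (forall N, Q N -> Q (g *m N)) -> Q M ->
  Q (iter n (mulmx g) 1 *m M).
Proof.
move=> hg hM; elim: n => [|n IH] /=; first by rewrite mul1mx.
by rewrite -mulmxA; apply: hg.
Qed.

Lemma iO : invmx omegaI = iter 7 (mulmx omegaI) 1.
Proof. apply: inv_of; rewrite /=; mxsolve. Qed.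
Lemma iH : invmx Hg = Hg.
Proof. apply: inv_of; mxsolve. Qed.
Lemma iS : invmx Sg = iter 3 (mulmx Sg) 1.
Proof. apply: inv_of; rewrite /=; mxsolve. Qed.

Lemma Q1 : Q 1.
Proof.
exists 1, 0, false, 0, k1, false; split; first exact: gen_one.
by rewrite NFE ph0 /= !mul1mx.
Qed.

Lemma QU U : clifford_V U -> Q U.
Proof.
elim => [|g M hg _ IH|g M hg _ IH]; first exact: Q1.
- case: hg => [->|[->|[->|hv]]].
  + exact: Q_omega.
  + exact: Q_H.
  + exact: Q_S.
  + by case: (@Q_V g M hv IH).
- case: hg => [->|[->|[->|hv]]].
  + by rewrite iO; apply: Q_iter => //; exact: Q_omega.
  + by rewrite iH; exact: Q_H.
  + by rewrite iS; apply: Q_iter => //; exact: Q_S.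
  + by case: (@Q_V g M hv IH).
Qed.

Lemma PS_mul M1 M2 : pauli_S M1 -> pauli_S M2 -> pauli_S (M1 *m M2).
Proof.
move=> h1 h2; elim: h1 => [|g M hg _ IH|g M hg _ IH].
- by rewrite mul1mx.
- by rewrite -mulmxA; apply: gen_mul.
- by rewrite -mulmxA; apply: gen_inv.
Qed.

Lemma PS_gen g : g = Xg \/ g = Yg \/ g = Zg \/ g = Sg -> pauli_S g.
Proof. by move=> hg; rewrite -[g]mulmx1; apply: gen_mul => //; exact: gen_one. Qed.

Lemma PS_NF a b c : pauli_S (NF a b c).
Proof.
rewrite NFE; apply: PS_mul; first apply: PS_mul.
- elim: a => [|a IH]; first by rewrite ph0; exact: gen_one.
  have -> : ph a.+1 = (Xg *m Yg *m Zg) *m ph a.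
    by rewrite -(addn1 a) -ph_add ph_comm; congr (_ *m _); rewrite /ph; mxsolve.
  apply: PS_mul => //; apply: PS_mul; first apply: PS_mul.
  + by apply: PS_gen; left.
  + by apply: PS_gen; right; left.
  + by apply: PS_gen; right; right; left.
- by case: b => /=; [apply: PS_gen; left | exact: gen_one].
- elim: c => [|c IH] /=; first exact: gen_one.
  by apply: gen_mul => //; right; right; right.
Qed.

Theorem lemma6p5 (U : 'M[algC]_2) :
  clifford_V U ->
  exists A B C : 'M[algC]_2,
    [/\ V_product A, pauli_S B,
        C \in [:: 1; Hg; Hg *m Sg; omegaI; Hg *m omegaI; Hg *m Sg *m omegaI]
      & U = A *m B *m C].
Proof.
move=> /QU [A [a [b [c [k [e [hA ->]]]]]]].
exists A, (NF a b c), (C0 k *m Wm e); split => //; first exact: PS_NF.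
by case: k; case: e; rewrite /= ?mul1mx ?mulmx1 !inE eqxx ?orbT.
Qed.
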